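(* Let $(Q,P)$ be a weakly quasi-lattice ordered group and let $\Lambda$ be a finitely aligned $P$-graph. Then the collection of sets $Z(\mu\setminus K)=\{x\in\mathcal{F}(\Lambda):\mu\in x,\ x\cap K=\emptyset\}$, where $\mu\in\Lambda$ and $K\subseteq\mu\Lambda$ is finite, is a basis for the topology of $\mathcal{F}(\Lambda)$.
   Context: $(Q,P)$ weakly quasi-lattice ordered: $Q$ a discrete group, $P\subseteq Q$ a subsemigroup containing the identity $e$ with $P\cap P^{-1}=\{e\}$, and, with $p\le r$ meaning $pq=r$ for some $q\in P$, any two elements of $P$ with a common upper bound have a least common upper bound. A $P$-graph is a countable small category $\Lambda$ (range/source $r,s$) with a functor $d:\Lambda\to P$ with unique factorisation (if $d(\lambda)=pq$ there are unique $\mu,\nu$ with $\lambda=\mu\nu$, $d(\mu)=p$, $d(\nu)=q$). Write $\lambda\Lambda=\{\lambda\mu: s(\lambda)=r(\mu)\}$, $\mu\preceq\lambda$ iff $\lambda\in\mu\Lambda$. $\Lambda$ is finitely aligned if for all $\mu,\nu\in\Lambda$ there is a finite (possibly empty) $J\subseteq\Lambda$ with $\mu\Lambda\cap\nu\Lambda=\bigcup_{\kappa\in J}\kappa\Lambda$. A filter is a nonempty hereditary and directed subset of $\Lambda$ (w.r.t. $\preceq$); $\mathcal{F}(\Lambda)$ is the set of filters, with the subspace topology from $\mathcal{P}(\Lambda)\cong\{0,1\}^\Lambda$ carrying the product topology (basis $\{x: K_1\subseteq x\subseteq\Lambda\setminus K_2\}$, $K_1,K_2$ finite). *)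

(* Defs.v *)
From Stdlib Require Import List.
Import ListNotations.
Set Implicit Arguments.

Record wqlo := WQLO {
  Q : Type;
  mul : Q -> Q -> Q;
  e : Q;
  inv : Q -> Q;
  mulA : forall a b c, mul a (mul b c) = mul (mul a b) c;
  mul1q : forall a, mul e a = a;
  mulq1 : forall a, mul a e = a;
  mulVq : forall a, mul (inv a) a = e;
  mulqV : forall a, mul a (inv a) = e;
  P : Q -> Prop;
  P_e : P e;
  P_mul : forall p q, P p -> P q -> P (mul p q);
  P_cap_Pinv : forall p, P p -> P (inv p) -> p = e;
  (* two elements of P with a common upper bound have a least common upper bound *)
  P_wqlo : forall p q, P p -> P q ->
    (exists r, P r /\ (exists a, P a /\ mul p a = r) /\ (exists b, P b /\ mul q b = r)) ->
    exists l, P l /\ (exists a, P a /\ mul p a = l) /\ (exists b, P b /\ mul q b = l) /\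
      forall r, P r -> (exists a, P a /\ mul p a = r) -> (exists b, P b /\ mul q b = r) ->
        exists c, P c /\ mul l c = r
}.

Definition Ple (G : wqlo) (p r : Q G) : Prop := exists q, P G q /\ mul G p q = r.

(** Composition is a total function, only meaningful (and only
    constrained) on composable pairs (s λ = r μ), written comp λ μ = λμ. *)
Record Pgraph (G : wqlo) := PGraph {
  Obj : Type;
  Mor : Type;
  rng : Mor -> Obj;
  src : Mor -> Obj;
  idm : Obj -> Mor;
  comp : Mor -> Mor -> Mor;
  rng_id : forall v, rng (idm v) = v;
  src_id : forall v, src (idm v) = v;
  rng_comp : forall l m, src l = rng m -> rng (comp l m) = rng l;
  src_comp : forall l m, src l = rng m -> src (comp l m) = src m;
  comp_id_l : forall l, comp (idm (rng l)) l = l;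
  comp_id_r : forall l, comp l (idm (src l)) = l;
  compA : forall l m n, src l = rng m -> src m = rng n ->
            comp l (comp m n) = comp (comp l m) n;
  Obj_countable : exists f : Obj -> nat, forall a b, f a = f b -> a = b;
  Mor_countable : exists f : Mor -> nat, forall a b, f a = f b -> a = b;
  deg : Mor -> Q G;
  deg_P : forall l, P G (deg l);
  deg_id : forall v, deg (idm v) = e G;
  deg_comp : forall l m, src l = rng m -> deg (comp l m) = mul G (deg l) (deg m);
  unique_fact : forall l p q, P G p -> P G q -> deg l = mul G p q ->
    exists m n, src m = rng n /\ l = comp m n /\ deg m = p /\ deg n = q /\
      forall m' n', src m' = rng n' -> l = comp m' n' -> deg m' = p -> deg n' = q ->
        m' = m /\ n' = n
}.

Section PgraphDefs.
Variable G : wqlo.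
Variable L : Pgraph G.

Definition inpath (mu lam : Mor L) : Prop :=
  exists nu, src L mu = rng L nu /\ lam = comp L mu nu.

Definition prec (mu lam : Mor L) : Prop := inpath mu lam.

Definition finitely_aligned : Prop :=
  forall mu nu, exists J : list (Mor L),
    forall lam, (inpath mu lam /\ inpath nu lam) <-> exists k, In k J /\ inpath k lam.

(** subsets of Λ, i.e. elements of P(Λ) ≅ {0,1}^Λ *)
Definition subsetL := Mor L -> Prop.

Definition is_filter (x : subsetL) : Prop :=
  (exists l, x l) /\
  (forall l m, x l -> prec m l -> x m) /\
  (forall l m, x l -> x m -> exists n, x n /\ prec l n /\ prec m n).

(** basic open sets {x : K1 ⊆ x ⊆ Λ \ K2} of the product topology *)
Definition basic_open (K1 K2 : list (Mor L)) (x : subsetL) : Prop :=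
  (forall k, In k K1 -> x k) /\ (forall k, In k K2 -> ~ x k).

Definition openP (U : subsetL -> Prop) : Prop :=
  forall x, U x -> exists K1 K2, basic_open K1 K2 x /\
    forall y, basic_open K1 K2 y -> U y.

Definition openF (V : subsetL -> Prop) : Prop :=
  exists U, openP U /\ forall x, V x <-> (is_filter x /\ U x).

Definition is_basisF (B : (subsetL -> Prop) -> Prop) : Prop :=
  (forall S, B S -> openF S) /\
  (forall V, openF V -> forall x, V x ->
     exists S, B S /\ S x /\ forall y, S y -> V y).

Definition Zset (mu : Mor L) (K : list (Mor L)) (x : subsetL) : Prop :=
  is_filter x /\ x mu /\ forall k, In k K -> ~ x k.

Definition Zcollection (S : subsetL -> Prop) : Prop :=
  exists mu K, (forall k, In k K -> inpath mu k) /\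
    forall x, S x <-> Zset mu K x.

End PgraphDefs.

(* Main.v *)
Require Import Defs.
From Stdlib Require Import List.

Section Aux.
Variable G : wqlo.
Variable L : Pgraph G.

Lemma prec_refl (k : Mor L) : @prec G L k k.
Proof. exists (idm L (src L k)). rewrite rng_id, comp_id_r. auto. Qed.

Lemma prec_trans (a b c : Mor L) : @prec G L a b -> @prec G L b c -> @prec G L a c.
Proof.
  intros [n1 [H1 ->]] [n2 [H2 ->]].
  rewrite src_comp in H2 by exact H1.
  exists (comp L n1 n2). split.
  - rewrite rng_comp by exact H2. exact H1.
  - symmetry. apply compA; assumption.
Qed.

Lemma upper (x : subsetL L) : is_filter x -> forall K1 : list (Mor L),
  (forall k, In k K1 -> x k) -> exists mu, x mu /\ forall k, In k K1 -> @prec G L k mu.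
Proof.
  intros [[l Hl] [Hh Hd]] K1. induction K1 as [|a K1 IH]; intros HK.
  - exists l. split; [exact Hl| intros k []].
  - destruct IH as [m [Hm Hk]]. { intros k Hk; apply HK; right; exact Hk. }
    destruct (Hd m a Hm (HK a (or_introl eq_refl))) as [n [Hn [Hmn Han]]].
    exists n. split; [exact Hn|]. intros k [<-|Hk'].
    + exact Han.
    + eapply prec_trans; [apply Hk; exact Hk'|exact Hmn].
Qed.

Lemma getK (FA : finitely_aligned L) (x : subsetL L) (Fx : is_filter x) (mu : Mor L) :
  forall K2 : list (Mor L), (forall k, In k K2 -> ~ x k) ->
  exists K : list (Mor L), (forall c, In c K -> @inpath G L mu c /\ ~ x c) /\
    forall k, In k K2 -> forall y, is_filter y -> y mu -> (forall c, In c K -> ~ y c) -> ~ y k.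
Proof.
  induction K2 as [|a K2 IH]; intros HK.
  - exists nil. split; [intros c []| intros k []].
  - destruct IH as [K [HK1 HK2]]. { intros k Hk; apply HK; right; exact Hk. }
    destruct (FA mu a) as [J HJ].
    exists (J ++ K). split.
    + intros c Hc. apply in_app_or in Hc. destruct Hc as [Hc|Hc]; [|apply HK1; exact Hc].
      assert (Hcc : @inpath G L mu c /\ @inpath G L a c).
      { apply HJ. exists c. split; [exact Hc| apply prec_refl]. }
      split; [apply Hcc|]. intro Hxc.
      apply (HK a (or_introl eq_refl)).
      destruct Fx as [_ [Hh _]]. eapply Hh; [exact Hxc| apply Hcc].
    + intros k [<-|Hk] y Fy Hymu Hy Hyk.
      * destruct Fy as [_ [Hh Hd]].
        destruct (Hd mu a Hymu Hyk) as [n [Hn [H1 H2]]].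
        destruct (proj1 (HJ n) (conj H1 H2)) as [c [Hc Hcn]].
        apply (Hy c). { apply in_or_app; left; exact Hc. }
        eapply Hh; [exact Hn| exact Hcn].
      * eapply HK2; [exact Hk|exact Fy|exact Hymu| |exact Hyk].
        intros c Hc; apply Hy; apply in_or_app; right; exact Hc.
Qed.
End Aux.

Theorem lemma6p2 (G : wqlo) (L : Pgraph G) :
  finitely_aligned L -> is_basisF (@Zcollection G L).
Proof.
  intro FA. split.
  - intros S [mu [K [HK HS]]].
    exists (basic_open (mu :: nil) K). split.
    + intros x Hx. exists (mu :: nil), K. split; [exact Hx| auto].
    + intro x. rewrite HS. unfold Zset, basic_open. split.
      * intros [F [Hm Hk]]. split; [exact F|]. split; [|exact Hk].
        intros k [<-|[]]. exact Hm.
      * intros [F [Hm Hk]]. split; [exact F|]. split; [|exact Hk].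
        apply Hm. left; reflexivity.
  - intros V [U [HU HV]] x Hx.
    destruct (proj1 (HV x) Hx) as [Fx Ux].
    destruct (HU x Ux) as [K1 [K2 [[HB1 HB2] HBU]]].
    destruct (@upper G L x Fx K1 HB1) as [mu [Hmu Hup]].
    destruct (@getK G L FA x Fx mu K2 HB2) as [K [HKa HKb]].
    exists (Zset mu K). split; [|split].
    + exists mu, K. split; [intros c Hc; apply HKa; exact Hc| tauto].
    + split; [exact Fx|]. split; [exact Hmu|]. intros c Hc; apply HKa; exact Hc.
    + intros y [Fy [Hymu Hy]]. apply HV. split; [exact Fy|].
      apply HBU. split.
      * intros k Hk. destruct Fy as [_ [Hh _]]. eapply Hh; [exact Hymu| apply Hup; exact Hk].
      * intros k Hk. eapply HKb; eauto.
Qed.
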